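(* There is an absolute constant $C>0$ such that the following holds. Let $(U,\mathcal{S})$ be a set system with $|U|=n$ and $|\mathcal{S}|=m$ whose sets cover $U$, let $R\subseteq U$ be nonempty, let $\epsilon>0$, $\delta\in(0,1)$, and $\epsilon'=\epsilon/(2\ln(e/\delta))$. Consider the algorithm that sets $R_1=R$, $\mathcal{S}_1=\mathcal{S}$ and for $i=1,\dots,m$: picks a set $S\in\mathcal{S}_i$ with probability proportional to $\exp(\epsilon'|S\cap R_i|)$, outputs $S$, and sets $R_{i+1}=R_i\setminus S$, $\mathcal{S}_{i+1}=\mathcal{S}_i\setminus\{S\}$. Its cost is the number of distinct sets obtained by assigning each element of $R$ to the first set in the output permutation containing it. Then the expected cost is at most $C\big(\ln n+\frac{\ln m}{\epsilon'}\big)\mathrm{OPT}$, i.e. at most $C'\big(\ln n+\frac{\ln m\,\ln(e/\delta)}{\epsilon}\big)\mathrm{OPT}$ for an absolute constant $C'$.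
   Context: $\mathrm{OPT}$ denotes the minimum number of sets of $\mathcal{S}$ whose union contains $R$. *)

(* Defs.v *)
From HB Require Import structures.
From mathcomp Require Import all_boot all_order all_algebra all_fingroup.
From mathcomp Require Import all_classical all_reals all_analysis.
Set Implicit Arguments. Unset Strict Implicit. Unset Printing Implicit Defensive.
Import Order.TTheory GRing.Theory Num.Theory.
Local Open Scope ring_scope.

Definition perm_of (T : finType) : finType := {perm T}.

Section ExpMech.
Variables (R : realType) (U I : finType) (S : I -> {set U}).

Definition emweight (eps : R) (Rcur : {set U}) (j : I) : R :=
  expR (eps * (#|S j :&: Rcur|)%:R).

Fixpoint seq_prob (eps : R) (Rcur : {set U}) (avail : {set I}) (s : seq I) : R :=
  match s with
  | [::] => 1
  | j :: s' =>
      (if j \in avail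
       then emweight eps Rcur j / \sum_(k in avail) emweight eps Rcur k
       else 0) * seq_prob eps (Rcur :\: S j) (avail :\ j) s'
  end.

Definition first_set (s : seq I) (x : U) : option I :=
  ohead [seq j <- s | x \in S j].

Definition order_cost (Rset : {set U}) (s : seq I) : nat :=
  #|[set j : I | [exists x in Rset, first_set s x == Some j]]|.

Definition expected_cost (eps : R) (Rset : {set U}) : R :=
  \sum_(p : perm_of I)
     seq_prob eps Rset [set: I]%SET [seq p j | j <- enum I] *
     (order_cost Rset [seq p j | j <- enum I])%:R.

(* OPT: minimum number of sets whose union contains Rset (default #|I| is
   never attained-irrelevant once the sets cover U, as setT is a cover) *)
Definition opt_cover (Rset : {set U}) : nat :=
  \big[minn/#|I|]_(T : {set I} | Rset \subset \bigcup_(j in T) S j) #|T|.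

End ExpMech.

(* Main.v *)
Require Import Defs.
From HB Require Import structures.
From mathcomp Require Import all_boot all_order all_algebra all_fingroup.
From mathcomp Require Import all_classical all_reals all_analysis.
From mathcomp Require Import ring lra zify.
Set Implicit Arguments. Unset Strict Implicit.
Import Order.TTheory GRing.Theory Num.Theory.
Local Open Scope ring_scope.

Section Gen.
Variables (R : realType) (U I : finType) (S : I -> {set U}) (eps : R).

Fixpoint allseqs (n : nat) : seq (seq I) :=
  if n is n'.+1 then [seq j :: s | j <- index_enum I, s <- allseqs n']
  else [:: [::]].

Lemma allseqs_uniq n : uniq (allseqs n).
Proof.
elim: n => [//|n IH] /=.
apply: allpairs_uniq => //; first exact: index_enum_uniq.
by move=> [a s] [b t] _ _ /= [-> ->].
Qed.

Lemma mem_allseqs s : s \in allseqs (size s).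
Proof.
elim: s => [|j s IH] /=; first by rewrite inE.
by apply: allpairs_f => //; rewrite mem_index_enum.
Qed.

Lemma seq_prob_ge0 Rc A s : 0 <= seq_prob S eps Rc A s.
Proof.
elim: s Rc A => [|j s IH] Rc A /=; first exact: ler01.
apply: mulr_ge0 => //; case: ifP => // _.
apply: divr_ge0; first exact: expR_ge0.
by apply: sumr_ge0 => k _; exact: expR_ge0.
Qed.

Lemma first_set_cons j s x :
  first_set S (j :: s) x = if x \in S j then Some j else first_set S s x.
Proof. by rewrite /first_set /=; case: ifP. Qed.

Lemma first_set_in s x j : first_set S s x = Some j -> x \in S j.
Proof.
elim: s => [//|j' s IH]; rewrite first_set_cons.
by case: ifP => [xj [<-] //|_ /IH].
Qed.

Lemma order_cost_nil Rc : order_cost S Rc [::] = 0%N.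
Proof.
rewrite /order_cost; apply/eqP; rewrite cards_eq0; apply/eqP/setP => j.
rewrite !inE; apply/negbTE/existsP => -[x /andP [_ ]].
by rewrite /first_set.
Qed.

Lemma order_cost_cons Rc j s :
  order_cost S Rc (j :: s) =
  ((S j :&: Rc != finset.set0) + order_cost S (Rc :\: S j) s)%N.
Proof.
rewrite /order_cost.
set Y := [set j' | [exists x in Rc :\: S j, first_set S s x == Some j']].
have jY : j \notin Y.
  rewrite inE; apply/existsP => -[x /andP [] ]; rewrite !inE => /andP [xj _].
  by move/eqP/first_set_in; rewrite (negbTE xj).
have HY : forall j', j' != j ->
  (j' \in [set j'0 | [exists x in Rc, first_set S (j :: s) x == Some j'0]])
   = (j' \in Y).
  move=> j' nj; rewrite !inE; apply/existsP/existsP => -[x /andP [xR]].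
    rewrite first_set_cons; case: ifP => xj.
      by move/eqP=> [E]; rewrite E eqxx in nj.
    by move=> E; exists x; rewrite !inE xj xR.
  move: xR; rewrite !inE => /andP [xj xR'] E; exists x; rewrite xR' first_set_cons.
  by rewrite (negbTE xj).
case: (boolP (S j :&: Rc == finset.set0)) => /= h.
  rewrite add0n; apply: eq_card => j'.
  case: (eqVneq j' j) => [->|nj]; last by rewrite HY.
  rewrite (negbTE jY) inE; apply/negbTE/existsP => -[x /andP [xR]].
  rewrite first_set_cons; case: ifP => xj.
    by move: h => /eqP/setP/(_ x); rewrite !inE xj xR.
  by move/eqP/first_set_in; rewrite xj.
have -> : [set j'0 | [exists x in Rc, first_set S (j :: s) x == Some j'0]]
   = j |: Y.
  apply/setP => j'; rewrite in_setU1; case: (eqVneq j' j) => [->|nj].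
    rewrite ?eqxx ?orTb inE; case/set0Pn: h => x; rewrite inE => /andP [xj xR].
    apply/existsP; exists x; apply/andP; split => //.
    by rewrite first_set_cons xj.
  by rewrite ?orFb HY.
by rewrite cardsU1 jY.
Qed.


Definition q Rc (A : {set I}) j : R :=
  if j \in A then emweight S eps Rc j / \sum_(k in A) emweight S eps Rc k
  else 0.

Lemma seq_prob_cons Rc A j s :
  seq_prob S eps Rc A (j :: s) = q Rc A j * seq_prob S eps (Rc :\: S j) (A :\ j) s.
Proof. by []. Qed.

Lemma q_ge0 Rc A j : 0 <= q Rc A j.
Proof.
rewrite /q; case: ifP => // _; apply: divr_ge0; first exact: expR_ge0.
by apply: sumr_ge0 => k _; exact: expR_ge0.
Qed.

Lemma sum_q Rc A : \sum_j q Rc A j <= 1.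
Proof.
rewrite /q -big_mkcond /= -mulr_suml.
set W := \sum_(k in A) _.
have [->|W0] := eqVneq W 0; first by rewrite mul0r ler01.
by rewrite divff.
Qed.

Definition Pn n Rc A := \sum_(s <- allseqs n) seq_prob S eps Rc A s.
Definition En n Rc A :=
  \sum_(s <- allseqs n) seq_prob S eps Rc A s * (order_cost S Rc s)%:R.

Lemma Pn_le1 n Rc A : Pn n Rc A <= 1.
Proof.
elim: n Rc A => [|n IH] Rc A; first by rewrite /Pn /= big_seq1.
rewrite /Pn /= big_allpairs_dep /=.
apply: le_trans (sum_q Rc A); apply: ler_sum => j _.
rewrite -mulr_sumr -[leRHS]mulr1; apply: ler_wpM2l; first exact: q_ge0.
exact: IH.
Qed.

Lemma En_cons n Rc A :
  En n.+1 Rc A = \sum_j q Rc A j *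
    ((S j :&: Rc != finset.set0)%:R * Pn n (Rc :\: S j) (A :\ j)
     + En n (Rc :\: S j) (A :\ j)).
Proof.
rewrite /En /Pn /= big_allpairs_dep /=; apply: eq_bigr => j _.
rewrite big_distrr -big_split mulr_sumr; apply: eq_bigr => s _.
rewrite -/(q Rc A j) order_cost_cons natrD /=; ring.
Qed.

Lemma sub_sum (T : eqType) (l1 l2 : seq T) (F : T -> R) :
  uniq l1 -> uniq l2 -> {subset l1 <= l2} -> (forall x, 0 <= F x) ->
  \sum_(x <- l1) F x <= \sum_(x <- l2) F x.
Proof.
move=> u1 u2 sub F0.
have -> : \sum_(x <- l1) F x = \sum_(x <- l2 | x \in l1) F x.
  rewrite -[RHS]big_filter.
  apply: perm_big; apply: uniq_perm => //; first exact: filter_uniq.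
  move=> x; rewrite mem_filter; case: (boolP (x \in l1)) => //= /sub ->.
  by [].
rewrite [leRHS](bigID (fun x => x \in l1)) /=.
by rewrite lerDl; apply: sumr_ge0 => x _.
Qed.

Lemma expected_le Rset :
  expected_cost S eps Rset <= En #|I| Rset [set: I].
Proof.
rewrite /expected_cost /En.
set F := fun s => seq_prob S eps Rset [set: I] s * (order_cost S Rset s)%:R.
rewrite -(big_map (fun p : perm_of I => [seq p j | j <- enum I]) xpredT F).
apply: sub_sum.
- rewrite map_inj_uniq; first exact: index_enum_uniq.
  move=> p p' /eq_in_map H; apply/permP => x; apply: H; by rewrite mem_enum.
- exact: allseqs_uniq.
- move=> s /mapP [p _ ->].
  have := mem_allseqs [seq p j | j <- enum I].
  by rewrite size_map -cardE.
- move=> s; rewrite /F; apply: mulr_ge0; first exact: seq_prob_ge0.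
  exact: ler0n.
Qed.

End Gen.

Section Analysis.
Variables (R : realType) (U I : finType) (S : I -> {set U}) (eps : R).
Variables (Rset : {set U}) (T0 : {set I}).
Hypothesis eps_gt0 : 0 < eps.
Hypothesis cov : Rset \subset \bigcup_(j in T0) S j.
Hypothesis k_gt0 : (0 < #|T0|)%N.
Hypothesis m_gt0 : (0 < #|I|)%N.

Let k := #|T0|.
Let m := #|I|.

Definition Tt : R := 4 * k%:R * ln (m%:R : R) / eps + 1.

Lemma lnm_ge0 : 0 <= ln (m%:R : R).
Proof. by apply: ln_ge0; rewrite ler1n. Qed.

Lemma kR_gt0 : 0 < (k%:R : R).
Proof. by rewrite ltr0n. Qed.

Lemma Tt_ge1 : 1 <= Tt.
Proof.
rewrite /Tt lerDr; apply: divr_ge0; last exact: ltW.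
apply: mulr_ge0; last exact: lnm_ge0.
by apply: mulr_ge0 => //; exact: ler0n.
Qed.

Definition g (r : nat) : R :=
  if r%:R <= Tt then r%:R else Tt + 1 + 2 * k%:R * ln (r%:R / Tt).

Lemma ln_rT_ge0 (r : nat) : Tt < r%:R -> 0 <= ln (r%:R / Tt).
Proof.
move=> h; apply: ln_ge0.
have T0' : 0 < Tt by apply: lt_le_trans Tt_ge1.
by rewrite ler_pdivlMr // mul1r ltW.
Qed.

Lemma g_ge0 r : 0 <= g r.
Proof.
rewrite /g; case: ifPn => [_|]; first exact: ler0n.
rewrite -ltNge => h.
have := ln_rT_ge0 h; have := Tt_ge1; have := kR_gt0.
move=> a b c; have : 0 <= 2 * k%:R * ln (r%:R / Tt).
  by apply: mulr_ge0 => //; apply: mulr_ge0 => //; exact: ltW.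
lra.
Qed.

Lemma g_big_ge r : Tt < r%:R -> Tt + 1 <= g r.
Proof.
move=> h; rewrite /g; case: ifPn => [h'|_]; first by move: h h'; lra.
have := ln_rT_ge0 h; have := kR_gt0 => a b.
have : 0 <= 2 * k%:R * ln (r%:R / Tt).
  by apply: mulr_ge0 => //; apply: mulr_ge0 => //; exact: ltW.
lra.
Qed.

Lemma g_mono r1 r2 : (r1 <= r2)%N -> g r1 <= g r2.
Proof.
move=> le12; have le12R : (r1%:R : R) <= r2%:R by rewrite ler_nat.
have T0' : 0 < Tt by apply: lt_le_trans Tt_ge1.
case: (boolP (r2%:R <= Tt)) => h2.
  rewrite /g h2 (le_trans le12R h2) //.
rewrite -ltNge in h2.
case: (boolP (r1%:R <= Tt)) => h1.
  rewrite {1}/g h1; apply: le_trans (g_big_ge h2); move: h1; lra.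
rewrite -ltNge in h1.
rewrite /g !ifN -?ltNge //.
rewrite lerD2l; apply: ler_wpM2l.
  by apply: mulr_ge0 => //; exact: ltW kR_gt0.
have p1 : 0 < (r1%:R : R) / Tt by apply: divr_gt0 => //; apply: lt_trans h1.
have p2 : 0 < (r2%:R : R) / Tt by apply: divr_gt0 => //; apply: lt_trans h2.
rewrite ler_ln ?posrE //.
by rewrite ler_pM2r ?invr_gt0.
Qed.


Lemma g_dec r c : (0 < c)%N -> (c <= r)%N ->
  (Tt < r%:R -> (r <= 2 * k * c)%N) -> 1 + g (r - c) <= g r.
Proof.
move=> c0 cr hgood.
have T0' : 0 < Tt by apply: lt_le_trans Tt_ge1.
have rc : ((r - c)%:R : R) = r%:R - c%:R by rewrite natrB.
have c1 : (1 : R) <= c%:R by rewrite ler1n.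
case: (boolP (r%:R <= Tt)) => hr.
  have hrc : ((r - c)%:R : R) <= Tt.
    by apply: le_trans hr; rewrite ler_nat leq_subr.
  by rewrite /g hr hrc rc; lra.
rewrite -ltNge in hr.
case: (boolP ((r - c)%:R <= Tt)) => hrc.
  rewrite {1}/g hrc; apply: le_trans (g_big_ge hr); move: hrc; lra.
rewrite -ltNge in hrc.
have good := hgood hr.
rewrite /g ifN -?ltNge // ifN -?ltNge //.
have r0 : (0 : R) < r%:R by apply: lt_trans hr.
have rc0 : (0 : R) < (r - c)%:R by apply: lt_trans hrc.
rewrite !ln_div ?posrE //.
set a := ln (r%:R : R); set b := ln ((r - c)%:R : R).
have hab : (c%:R : R) / r%:R <= a - b.
  have h1 : ((r - c)%:R : R) = r%:R * (1 + - (c%:R / r%:R)).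
    by rewrite rc mulrDr mulr1 mulrN mulrCA divff ?mulr1 // gt_eqF.
  have hx : -1 < - ((c%:R : R) / r%:R).
    rewrite ltrN2 ltr_pdivrMr // mul1r.
    by move: rc0; rewrite rc; lra.
  have := le_ln1Dx hx.
  have hp : 0 < 1 + - ((c%:R : R) / r%:R) by move: hx; lra.
  rewrite /b h1 lnM ?posrE //; rewrite -/a; lra.
have h2 : (1 : R) <= 2 * k%:R * (c%:R / r%:R).
  rewrite mulrA ler_pdivlMr // mul1r -!natrM ler_nat.
  by [].
have h3 : 2 * k%:R * (c%:R / r%:R) <= 2 * k%:R * (a - b).
  by apply: ler_wpM2l => //; apply: mulr_ge0 => //; exact: ler0n.
have : 2 * k%:R * (a - b) = 2 * k%:R * (a - ln Tt) - 2 * k%:R * (b - ln Tt).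
  by ring.
lra.
Qed.

Lemma term_bound r c : (c <= r)%N ->
  (0 < c)%N%:R + g (r - c) <=
  g r + (if (Tt < r%:R) && ~~ (r <= 2 * k * c)%N then 1 else 0).
Proof.
move=> cr; case: (posnP c) => [->|c0].
  rewrite subn0 /= add0r; case: ifP => _; last by rewrite addr0.
  by rewrite lerDl.
have -> : (true%:R : R) = 1 by [].
case: (boolP (Tt < r%:R)) => /= hT; last first.
  rewrite addr0; apply: g_dec => // h; by rewrite h in hT.
case: (boolP (r <= 2 * k * c)%N) => /= hg.
  by rewrite addr0; apply: g_dec.
rewrite addrC lerD2r; apply: g_mono; exact: leq_subr.
Qed.

Definition cinv (Rc : {set U}) (A : {set I}) :=
  Rc \subset Rset /\ forall j, j \notin A -> S j :&: Rc = finset.set0.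

Lemma inv_step Rc A j : cinv Rc A -> j \in A -> cinv (Rc :\: S j) (A :\ j).
Proof.
move=> [sub H] jA; split.
  by apply: (fintype.subset_trans _ sub); apply/fintype.subsetP => x; rewrite inE => /andP [].
move=> j'; rewrite in_setD1 negb_and negbK => /orP [/eqP ->|nA].
  by apply/setP => x; rewrite !inE; case: (x \in S j).
apply/setP => x; have := H j' nA => /setP/(_ x); rewrite !inE => E.
by case: (x \in S j') E => //=; case: (x \in Rc) => //; rewrite andbF.
Qed.

Lemma exists_good Rc A : cinv Rc A -> (0 < #|Rc|)%N ->
  exists2 j, j \in A & (#|Rc| <= k * #|S j :&: Rc|)%N.
Proof.
move=> [sub H] r0.
have h1 : (#|Rc| <= \sum_(j in T0) #|S j :&: Rc|)%N.
  apply: (@leq_trans #|\bigcup_(j in T0) (S j :&: Rc)|).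
    apply: subset_leq_card; apply/fintype.subsetP => x xR.
    have : x \in \bigcup_(j in T0) S j.
      by apply: (fintype.subsetP cov); apply: (fintype.subsetP sub).
    case/bigcupP => j jT xj; apply/bigcupP; exists j => //.
    by rewrite inE xj xR.
  apply: (big_ind2 (fun (X : {set U}) (n : nat) => #|X| <= n)%N).
  - by rewrite cards0.
  - move=> X1 n1 X2 n2 h1 h2; have [h _] := leq_card_setU X1 X2.
    by apply: leq_trans h _; exact: leq_add.
  - by [].
case: (boolP [exists j in T0, #|Rc| <= k * #|S j :&: Rc|]%N).
  case/existsP => j /andP [jT hj]; exists j => //.
  apply/negP => nA; move: hj; rewrite (H j) ?cards0 ?muln0; last first.
    by apply/negP.
  by rewrite leqn0; move/eqP => E; rewrite E in r0.
move/existsPn => Hn.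
have h2 : (k * \sum_(j in T0) #|S j :&: Rc| <= k * (#|Rc| - 1))%N.
  rewrite big_distrr /=.
  apply: (@leq_trans (\sum_(j in T0) (#|Rc| - 1))%N).
    apply: leq_sum => j jT; have := Hn j; rewrite jT /= -ltnNge => h.
    by rewrite -ltnS subn1 prednK.
  by rewrite sum_nat_const.
have h3 : (k * #|Rc| <= k * (#|Rc| - 1))%N.
  by apply: leq_trans h2; rewrite leq_mul2l h1 orbT.
rewrite leq_pmul2l // in h3.
by move: h3 r0; lia.
Qed.


Lemma bad_mass Rc A : cinv Rc A -> Tt < #|Rc|%:R ->
  \sum_j (if ~~ (#|Rc| <= 2 * k * #|S j :&: Rc|)%N then q S eps Rc A j else 0)
  <= (m%:R : R)^-1.
Proof.
move=> hinv hT.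
have T0' : 0 < Tt by apply: lt_le_trans Tt_ge1.
have r0 : (0 < #|Rc|)%N by rewrite -(ltr0n R); apply: lt_trans hT.
have r0R : (0 : R) < #|Rc|%:R by rewrite ltr0n.
have kR := kR_gt0.
have mR : (0 : R) < m%:R by rewrite ltr0n.
case: (exists_good hinv r0) => js jsA hjs.
set r := #|Rc| in hT hjs r0 r0R *.
set W := \sum_(k in A) emweight S eps Rc k.
set x := eps * r%:R / (2 * k%:R).
have Wge : expR (2 * x) <= W.
  apply: (@le_trans _ _ (emweight S eps Rc js)).
    rewrite /emweight ler_expR.
    have -> : 2 * x = eps * (r%:R / k%:R).
      by rewrite /x; field; rewrite gt_eqF.
    apply: ler_wpM2l; first exact: ltW.
    by rewrite ler_pdivrMr // -natrM ler_nat mulnC.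
  rewrite /W (bigD1 js) //= lerDl; apply: sumr_ge0 => i _; exact: expR_ge0.
have W0 : 0 < W by apply: lt_le_trans (expR_gt0 _) Wge.
have term : forall j,
  (if ~~ (r <= 2 * k * #|S j :&: Rc|)%N then q S eps Rc A j else 0)
  <= expR x / W.
  move=> j; have hd : 0 <= expR x / W by apply: divr_ge0; [exact: expR_ge0|exact: ltW].
  case: ifP => hb //; rewrite /q; case: ifP => jA //.
  rewrite -/W ler_pM2r ?invr_gt0 // /emweight ler_expR /x -mulrA.
  apply: ler_wpM2l; first exact: ltW.
  rewrite ler_pdivlMr ?mulr_gt0 //. have -> : (2 * k%:R : R) = (2 * k)%:R by rewrite natrM.
  rewrite -natrM ler_nat mulnC ltnW //.
  by rewrite ltnNge.
apply: le_trans (ler_sum _ (fun j _ => term j)) _.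
rewrite sumr_const -/m -[_ *+ m]mulr_natl.
have xge : 2 * ln (m%:R : R) <= x.
  have h1 : 4 * k%:R * ln (m%:R : R) / eps <= r%:R by move: hT; rewrite /Tt; lra.
  rewrite ler_pdivrMr // in h1.
  rewrite /x ler_pdivlMr ?mulr_gt0 //.
  have -> : 2 * ln (m%:R : R) * (2 * k%:R) = 4 * k%:R * ln m%:R by ring.
  by rewrite [eps * _]mulrC.
have mme : m%:R * m%:R <= expR x.
  apply: le_trans (_ : expR (2 * ln (m%:R : R)) <= _); last by rewrite ler_expR.
  by rewrite mulr2n mulrDl mul1r expRD lnK ?posrE.
have ee : expR x * expR x <= W by rewrite -expRD -mulr2n -mulr_natl.
rewrite mulrA ler_pdivrMr // [_^-1 * W]mulrC ler_pdivlMr //.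
apply: le_trans ee.
rewrite mulrAC; apply: ler_wpM2r => //.
Qed.


Lemma step_bound Rc A : cinv Rc A ->
  \sum_j q S eps Rc A j *
     ((S j :&: Rc != finset.set0)%:R + g #|Rc :\: S j|)
  <= g #|Rc| + (m%:R : R)^-1.
Proof.
move=> hinv.
have hterm : forall j, q S eps Rc A j *
     ((S j :&: Rc != finset.set0)%:R + g #|Rc :\: S j|) <=
   q S eps Rc A j * g #|Rc| + q S eps Rc A j *
   (if (Tt < #|Rc|%:R) && ~~ (#|Rc| <= 2 * k * #|S j :&: Rc|)%N then 1 else 0).
  move=> j; rewrite -mulrDr; apply: ler_wpM2l; first exact: q_ge0.
  rewrite -card_gt0 cardsD (finset.setIC Rc (S j)); apply: term_bound.
  by rewrite subset_leq_card // subsetIr.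
apply: le_trans (ler_sum _ (fun j _ => hterm j)) _.
rewrite big_split /= -mulr_suml; apply: lerD.
  apply: ler_piMl; [exact: g_ge0 | exact: sum_q].
case: (boolP (Tt < #|Rc|%:R)) => hT /=.
  apply: le_trans (bad_mass hinv hT); apply: ler_sum => j _.
  by case: ifP => _; rewrite ?mulr1 ?mulr0.
rewrite big1 ?invr_ge0 ?ler0n // => j _; exact: mulr0.
Qed.

Lemma E_bound n Rc A : cinv Rc A ->
  En S eps n Rc A <= g #|Rc| + n%:R / (m%:R : R).
Proof.
elim: n Rc A => [|n IH] Rc A hinv.
  by rewrite /En /= big_seq1 order_cost_nil mulr0 mul0r addr0; exact: g_ge0.
rewrite En_cons.
have hterm : forall j, q S eps Rc A j *
    ((S j :&: Rc != finset.set0)%:R * Pn S eps n (Rc :\: S j) (A :\ j)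
     + En S eps n (Rc :\: S j) (A :\ j)) <=
    q S eps Rc A j * ((S j :&: Rc != finset.set0)%:R + g #|Rc :\: S j|)
    + q S eps Rc A j * (n%:R / m%:R).
  move=> j; rewrite -mulrDr; case: (boolP (j \in A)) => jA; last first.
    by rewrite /q ifN // !mul0r.
  apply: ler_wpM2l; first exact: q_ge0.
  have hE := IH _ _ (inv_step hinv jA).
  have hP := Pn_le1 S eps n (Rc :\: S j) (A :\ j).
  set h := ((S j :&: Rc != finset.set0)%:R : R) in hP *.
  have : h * Pn S eps n (Rc :\: S j) (A :\ j) <= h.
    by apply: ler_piMr => //; rewrite /h ler0n.
  lra.
apply: le_trans (ler_sum _ (fun j _ => hterm j)) _.
rewrite big_split /= -mulr_suml.
have h1 := step_bound hinv.
have h2 : (\sum_j q S eps Rc A j) * (n%:R / (m%:R : R)) <= n%:R / m%:R.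
  apply: ler_piMl; last exact: sum_q.
  by apply: divr_ge0; exact: ler0n.
rewrite -addn1 natrD mulrDl mul1r; lra.
Qed.


Lemma g_le r (N : nat) : (0 < r)%N -> (r <= N)%N ->
  g r <= Tt + 1 + 2 * k%:R * ln (N%:R : R).
Proof.
move=> r0 rN.
have N1 : (1 : R) <= N%:R by rewrite ler1n; apply: leq_trans rN.
have lnN : 0 <= ln (N%:R : R) by apply: ln_ge0.
have kN : 0 <= 2 * k%:R * ln (N%:R : R).
  by apply: mulr_ge0 => //; apply: mulr_ge0 => //; exact: ler0n.
have T1 := Tt_ge1.
rewrite /g; case: ifPn => h; first by lra.
rewrite -ltNge in h.
rewrite lerD2l; apply: ler_wpM2l; first by apply: mulr_ge0 => //; exact: ler0n.
have r0R : (0 : R) < r%:R by rewrite ltr0n.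
rewrite ln_div ?posrE //; last by apply: lt_le_trans T1.
have := ln_ge0 T1.
have : ln (r%:R : R) <= ln (N%:R : R).
  by rewrite ler_ln ?posrE ?ler_nat //; apply: lt_le_trans N1.
lra.
Qed.

End Analysis.

Unset Implicit Arguments.
Lemma ln_ge_half (R : realType) (n : nat) : (2 <= n)%N -> 1 / 2 <= ln (n%:R : R).
Proof.
move=> n2.
have hx : (-1 : R) < - (1 / 2) by lra.
have := le_ln1Dx hx.
have -> : (1 : R) + - (1 / 2) = 2^-1 by field.
rewrite lnV ?posrE // => h.
have : ln (2 : R) <= ln (n%:R : R).
  rewrite ler_ln ?posrE ?ltr0n //; last by apply: leq_trans n2.
  by rewrite ler_nat.
lra.
Qed.

Theorem mainTheorem9 (R : realType) :
  exists C : R, 0 < C /\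
  forall (U I : finType) (S : I -> {set U}) (Rset : {set U}) (eps delta : R),
    (2 <= #|U|)%N ->
    (\bigcup_(j : I) S j)%SET = [set: U]%SET ->
    Rset != finset.set0 ->
    0 < eps -> 0 < delta < 1 ->
    let eps' := eps / (2 * ln (expR 1 / delta)) in
    expected_cost S eps' Rset <=
      C * (ln (#|U|%:R) + ln (#|I|%:R) / eps') * (opt_cover S Rset)%:R.
Proof.
exists 8; split; first by lra.
move=> U I S Rset eps delta n2 hcov hR eps0 /andP [d0 d1].
cbv zeta; set eps' := eps / (2 * ln (expR 1 / delta)).
have e'0 : 0 < eps'.
  rewrite /eps'; apply: divr_gt0 => //; apply: mulr_gt0 => //.
  apply: ln_gt0; rewrite ltr_pdivlMr // mul1r.
  have := expR_ge1Dx (1 : R); lra.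
have [u _] : exists u : U, u \in [set: U] by exists (enum_val (Ordinal (leq_trans (isT : (0 < 2)%N) n2))); rewrite inE.
have mpos : (0 < #|I|)%N.
  move: (finset.in_setT u); rewrite -hcov => /bigcupP [j _ _].
  by apply/card_gt0P; exists j.
pose P := [pred T : {set I} | Rset \subset \bigcup_(j in T) S j].
have Ptop : P [set: I].
  rewrite inE; apply/fintype.subsetP => x _.
  move: (finset.in_setT x); rewrite -hcov => /bigcupP [j _ xj].
  by apply/bigcupP; exists j; rewrite ?inE.
case: (arg_minnP (P:=P) (fun T : {set I} => #|T|) Ptop) => T0 PT0 minT0.
have kopt : (#|T0| <= opt_cover S Rset)%N.
  rewrite /opt_cover; apply: (big_ind (fun x => #|T0| <= x)%N).
  - exact: max_card.
  - by move=> x y hx hy; rewrite leq_min hx hy.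
  - by move=> T PT; apply: minT0.
have kpos : (0 < #|T0|)%N.
  case/set0Pn: hR => x xR.
  move: (fintype.subsetP PT0 x xR) => /bigcupP [j jT _].
  by apply/card_gt0P; exists j.
have hinv : cinv S Rset Rset [set: I].
  by rewrite /cinv; split; [exact: fintype.subxx | move=> j; rewrite inE].
have hE := E_bound e'0 PT0 kpos mpos #|I| hinv.
have hX := expected_le S eps' Rset.
have r0 : (0 < #|Rset|)%N by rewrite card_gt0.
have hg := g_le T0 e'0 mpos r0 (max_card Rset).
rewrite divff ?gt_eqF ?ltr0n // in hE.
have lnn := @ln_ge_half R _ n2.
have L0 : 0 <= ln (#|I|%:R : R) / eps'.
  by apply: divr_ge0; [apply: ln_ge0; rewrite ler1n | exact: ltW].
move: hg; rewrite /Tt => hg.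
set k := #|T0| in hg kopt kpos *.
set O := opt_cover S Rset in kopt *.
set Ln := ln (#|U|%:R : R) in lnn hg *.
set L := ln (#|I|%:R : R) / eps' in L0 *.
have hk : (1 : R) <= k%:R by rewrite ler1n.
have hkO : (k%:R : R) <= O%:R by rewrite ler_nat.
have e1 : (Ln + L) * k%:R <= (Ln + L) * O%:R.
  by apply: ler_wpM2l => //; lra.
have e2 : 1 * Ln <= k%:R * Ln by apply: ler_wpM2r => //; lra.
have e3 : 4 * k%:R * ln (#|I|%:R : R) / eps' = 4 * k%:R * L.
  by rewrite /L !mulrA.
rewrite e3 in hg.
apply: le_trans hX _; apply: le_trans hE _.
rewrite -mulrA.
have e4 : 0 <= k%:R * L by apply: mulr_ge0 => //; exact: ler0n.
lra.
Qed.
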